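(* Let $G$ be a connected, finite, pointed, edge-ordered graph with distinguished vertex $v_0$, and let $T=(F\circ I'\circ\Theta)(G)$. Then the neighborhood ordering $\triangleleft$ of the distinguished point $v_0$ in $T$ is the lexicographic depth-first traversal of $G$: for vertices $u,v$ of $G$ with $v_0\to u$ and $v_0\to v$ in $T$, $v_0\to u\triangleleft v_0\to v$ in $T$ iff $u$ precedes $v$ in the lexicographic depth-first traversal of $G$ (and these targets are the vertices other than $v_0$, which comes first in the traversal).
   Context: A (directed) graph is $(V,\to)$ with $\to\subseteq V\times V$; $N(u)$ is the set of outgoing edges of $u$. A pointed graph has a distinguished vertex $v_0$; connected means every vertex is reachable by a path from $v_0$. A path is a finite sequence $v_1\to\cdots\to v_n$ of vertices joined by edges; proper if no vertex repeats; co-initial paths share their source; $\pi\sqsubset\sigma$ means $\pi$ is a proper prefix of $\sigma$. A finite edge-ordered graph is a finite graph with a strict linear order $\triangleleft$ on each neighborhood. Lexicographic path order: if $\pi\sqsubset\sigma$ then $\pi\prec\sigma$ (symmetrically); otherwise, with $\zeta$ the longest common prefix, $u$ its target and $v_1,v_2$ the next vertices, $\pi\prec\sigma$ iff $u\to v_1\triangleleft u\to v_2$. $\min(u\rightsquigarrow v)$ is the $\prec$-least proper path from $u$ to $v$. Lexicographic depth-first search on $G$: initialize a list $L=()$ and a stack $S=(v_0)$; while $S$ is nonempty, pop the top element $v$; if $v\in L$, continue; otherwise append $v$ to $L$ and push the vertices of $\partial v$ (neighbors of $v$ not in $L$) onto $S$ in reverse $\triangleleft$-order (so the $\triangleleft$-least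 ends on top). The lexicographic depth-first traversal is the order in which vertices are appended to $L$. Lex-homomorphisms, lex-graphs: a lex-homomorphism $h$ is a vertex map preserving edges, mapping exactly the distinguished vertex to the distinguished vertex, monotone on neighborhoods, and with $h(\min(u\rightsquigarrow v))=\min(h(u)\rightsquigarrow h(v))$; a lex-graph is a finite, pointed, connected, edge-ordered graph with $u\to v_1\triangleleft u\to v_2$ iff $\min(u\rightsquigarrow v_1)\prec\min(u\rightsquigarrow v_2)$. An arborescence is a pointed graph with a unique path $v_0\rightsquigarrow u$ for every $u$. Functors: $\Theta$ sends $G$ to the edge-ordered arborescence on the vertices of $G$ with the same distinguished vertex, containing $u\to v$ iff it is an edge of $\min(v_0\rightsquigarrow v)$ in $G$, with edge order inherited from $G$; $I'$ regards an edge-ordered arborescence as a lex-graph; $F$ sends a lex-graph $H$ to the graph on the same vertices and distinguished point with edge relation the transitive closure of that of $H$ and $u\to v_1\triangleleft u\to v_2$ iff $\min(u\rightsquigarrow v_1)\prec\min(u\rightsquigarrow v_2)$ in $H$. *)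

(* Defs.v *)
From mathcomp Require Import all_boot.
From Stdlib Require Import Relations.
Set Implicit Arguments. Unset Strict Implicit. Unset Printing Implicit Defensive.

Section Defs.
Variable V : finType.

(* A graph is given by an edge relation [e : rel V]; an edge order is
   [ord : V -> rel V], where [ord u a b] means  u -> a  <|  u -> b. *)

Definition edge_ordered (e : rel V) (ord : V -> rel V) : Prop :=
  forall u,
    (forall a, e u a -> ~~ ord u a a) /\
    (forall a b c, e u a -> e u b -> e u c -> ord u a b -> ord u b c -> ord u a c) /\
    (forall a b, e u a -> e u b -> a != b -> ord u a b || ord u b a).

(* A path  u = x_0 -> x_1 -> ... -> x_n  is represented by u and the list
   [x_1; ...; x_n].  Proper path from u to v: *)
(* Relations are Prop-valued here so that the same notions apply both to G
   (a [rel V], coerced) and to Theta(G) (defined as a Prop). *)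
Fixpoint ppath (e : V -> V -> Prop) (x : V) (p : seq V) : Prop :=
  match p with
  | [::] => True
  | y :: p' => e x y /\ ppath e y p'
  end.

Definition proper_path (e : V -> V -> Prop) (u v : V) (p : seq V) : Prop :=
  ppath e u p /\ uniq (u :: p) /\ last u p = v.

Fixpoint lexlt_from (ord : V -> rel V) (u : V) (p q : seq V) : bool :=
  match p, q with
  | [::], _ :: _ => true
  | _, [::] => false
  | a :: p', b :: q' => if a == b then lexlt_from ord a p' q' else ord u a b
  end.

Definition is_min_path (e : V -> V -> Prop) (ord : V -> rel V) (u v : V) (p : seq V) : Prop :=
  proper_path e u v p /\
  forall q, proper_path e u v q -> q <> p -> lexlt_from ord u p q.

(* Theta(G): u -> v iff it is an edge of min(v0 ~> v) in G; edge order inherited. *)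
Definition theta_edge (e : rel V) (ord : V -> rel V) (v0 : V) (x y : V) : Prop :=
  exists p, is_min_path e ord v0 y p /\
    exists p1 p2, v0 :: p = p1 ++ x :: y :: p2.

(* F(H): edges = transitive closure of H;  u -> a <| u -> b  iff
   min(u ~> a) < min(u ~> b) in H (H carries the order [ord] inherited from G). *)
Definition F_edge (eH : V -> V -> Prop) : V -> V -> Prop := clos_trans V eH.

Definition F_ord (eH : V -> V -> Prop) (ord : V -> rel V) (u a b : V) : Prop :=
  exists pa pb, is_min_path eH ord u a pa /\ is_min_path eH ord u b pb /\
                lexlt_from ord u pa pb.

(* The stack is a list with its top at
   the head.  When v is visited, its unvisited neighbours are pushed so that
   the <|-least one ends on top, i.e. the stack becomes (sorted dv) ++ S. *)
Definition push_nbrs (e : rel V) (ord : V -> rel V) (L : seq V) (v : V) : seq V :=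
  sort (fun a b => (a == b) || ord v a b) [seq w <- enum V | e v w & w \notin L].

Fixpoint lex_dfs_fuel (e : rel V) (ord : V -> rel V) (n : nat) (L S : seq V)
  : seq V :=
  match n with
  | 0 => L
  | n'.+1 =>
    match S with
    | [::] => L
    | v :: S' =>
      if v \in L then lex_dfs_fuel e ord n' L S'
      else lex_dfs_fuel e ord n' (rcons L v) (push_nbrs e ord (rcons L v) v ++ S')
    end
  end.

(* The fuel (#|V|+1)^2 bounds the number of loop iterations (at most #|V|^2
   pushes plus the initial one), so this is the complete traversal. *)
Definition lex_dfs (e : rel V) (ord : V -> rel V) (v0 : V) : seq V :=
  lex_dfs_fuel e ord (#|V|.+1 ^ 2) [::] [:: v0].

End Defs.

(* Main.v *)
Require Import Defs.
From mathcomp Require Import all_boot zify.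
From Stdlib Require Import Relations IndefiniteDescription.
Set Implicit Arguments. Unset Strict Implicit. Unset Printing Implicit Defensive.

Section Main.
Variable V : finType.
Variable e : rel V.
Variable ord : V -> rel V.
Variable v0 : V.
Hypothesis Hord : edge_ordered e ord.

Lemma ppathP x p : ppath (fun a b => e a b) x p <-> path e x p.
Proof.
elim: p x => [|y p IH] x //=; split.
- by case=> -> /IH ->.
- by case/andP=> -> /IH.
Qed.

Lemma ord_irr u a : e u a -> ord u a a = false.
Proof. by move=> h; have [H _] := Hord u; apply/negbTE/H. Qed.

Lemma ord_trans u a b c : e u a -> e u b -> e u c -> ord u a b -> ord u b c -> ord u a c.
Proof. by have [_ [H _]] := Hord u; apply: H. Qed.

Lemma ord_total u a b : e u a -> e u b -> a != b -> ord u a b || ord u b a.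
Proof. by have [_ [_ H]] := Hord u; apply: H. Qed.

Lemma lexlt_irr u p : lexlt_from ord u p p = false.
Proof. by elim: p u => [|a p IH] u //=; rewrite eqxx. Qed.

Lemma lexlt_trans u p q r : path e u p -> path e u q -> path e u r ->
  lexlt_from ord u p q -> lexlt_from ord u q r -> lexlt_from ord u p r.
Proof.
elim: p u q r => [|a p IH] u [|b q] [|c r] //=.
case/andP=> ea pa; case/andP=> eb pb; case/andP=> ec pc.
case: (eqVneq a b) => [eab|nab].
  subst b; case: (eqVneq a c) => [eac|nac]; first by subst c; exact: IH.
  by [].
case: (eqVneq b c) => [ebc|nbc].
  by subst c; rewrite (negbTE nab).
case: (eqVneq a c) => [eac|nac].
  by subst c => h1 h2; have := ord_trans ea eb ea h1 h2; rewrite ord_irr.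
exact: ord_trans.
Qed.

Lemma lexlt_asym u p q : path e u p -> path e u q ->
  lexlt_from ord u p q -> lexlt_from ord u q p -> False.
Proof. by move=> pp pq h1 h2; have := lexlt_trans pp pq pp h1 h2; rewrite lexlt_irr. Qed.

Lemma lexlt_total u p q : path e u p -> path e u q -> p != q ->
  lexlt_from ord u p q || lexlt_from ord u q p.
Proof.
elim: p u q => [|a p IH] u [|b q] //=.
case/andP=> ea pa; case/andP=> eb pb.
case: (eqVneq a b) => [eab|nab].
  subst b; rewrite eqseq_cons eqxx /= => h; exact: IH.
by move=> _; apply: ord_total.
Qed.

Lemma lexlt_prefix u p c r : lexlt_from ord u p (p ++ c :: r).
Proof. by elim: p u => [|a p IH] u //=; rewrite eqxx. Qed.

Lemma lexlt_div u c a b p q : a != b ->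
  lexlt_from ord u (c ++ a :: p) (c ++ b :: q) = ord (last u c) a b.
Proof.
move=> nab; elim: c u => [|d c IH] u /=; first by rewrite (negbTE nab).
by rewrite eqxx.
Qed.

Lemma lexlt_char u p q : lexlt_from ord u p q ->
  (exists c r, q = p ++ c :: r) \/
  (exists c a b p' q', [/\ p = c ++ a :: p', q = c ++ b :: q', a != b &
                        ord (last u c) a b]).
Proof.
elim: p u q => [|a p IH] u [|b q] //=.
  by move=> _; left; exists b, q.
case: (eqVneq a b) => [<-|nab].
  case/IH => [[c [r ->]]|[c [x [y [p' [q' [-> -> nxy h]]]]]]].
    by left; exists c, r.
  by right; exists (a :: c), x, y, p', q'.
move=> h; right; exists [::], a, b, p, q; split => //.
Qed.


Definition properb v p := [&& path e v0 p, uniq (v0 :: p) & last v0 p == v].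

Lemma properP v p : proper_path (fun a b => e a b) v0 v p <-> properb v p.
Proof.
rewrite /proper_path /properb; split.
  by case=> /ppathP -> [-> ->]; rewrite eqxx.
by case/and3P=> /ppathP ? -> /eqP.
Qed.

Fixpoint allseqs (k : nat) : seq (seq V) :=
  if k is k'.+1 then [::] :: [seq x :: s | x <- enum V, s <- allseqs k']
  else [:: [::]].

Lemma allseqsP k s : size s <= k -> s \in allseqs k.
Proof.
elim: k s => [|k IH] [|x s] //= hs.
rewrite inE; apply/orP; right; apply: allpairs_f; first by rewrite mem_enum.
exact: IH.
Qed.

Lemma list_min (T : eqType) (R : rel T) (s : seq T) :
  (forall x y z, x \in s -> y \in s -> z \in s -> R x y -> R y z -> R x z) ->
  (forall x y, x \in s -> y \in s -> x != y -> R x y || R y x) ->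
  s != [::] -> exists2 x, x \in s & forall y, y \in s -> y != x -> R x y.
Proof.
elim: s => [|a s IH] // Htr Hto _.
case: (eqVneq s [::]) => [->|ns].
  by exists a => [|y]; rewrite ?inE // => /eqP ->; rewrite eqxx.
have [|||b bs bmin] := IH => //.
- by move=> x y z hx hy hz; apply: Htr; rewrite inE ?hx ?hy ?hz orbT.
- by move=> x y hx hy; apply: Hto; rewrite inE ?hx ?hy orbT.
case: (eqVneq a b) => [eab|nab].
  subst b; exists a; rewrite ?inE ?eqxx // => y; rewrite inE => /orP[/eqP->|ys].
    by rewrite eqxx.
  exact: bmin.
have := Hto a b; rewrite !inE eqxx bs orbT => /(_ isT isT nab) /orP[hab|hba].
  exists a; rewrite ?inE ?eqxx // => y; rewrite inE => /orP[/eqP->|ys]; first by rewrite eqxx.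
  move=> nya; case: (eqVneq y b) => [->//|nyb].
  by apply: (Htr a b y); rewrite ?inE ?eqxx ?bs ?ys ?orbT //; apply: bmin.
exists b; rewrite ?inE ?bs ?orbT // => y; rewrite inE => /orP[/eqP->|ys] // nyb.
exact: bmin.
Qed.

Hypothesis Hconn : forall v, connect e v0 v.

Lemma ex_min v : exists p, is_min_path (fun a b => e a b) ord v0 v p.
Proof.
pose s := [seq p <- allseqs #|V| | properb v p].
have [p0 hp0] : exists p, properb v p.
  have /connectP [p pp lp] := Hconn v.
  rewrite lp; case: (shortenP pp) => p' pp' up' _.
  by exists p'; rewrite /properb pp' up' eqxx.
have ins p : properb v p -> p \in s.
  move=> hp; rewrite mem_filter hp; apply: allseqsP.
  case/and3P: hp => _ /card_uniqP /= hc _.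
  by have := max_card [in (v0 :: p)]; rewrite hc => /ltnW.
have [|||p ps pmin] := @list_min _ (lexlt_from ord v0) s.
- move=> x y z; rewrite !mem_filter => /andP[/and3P[hx _ _] _] /andP[/and3P[hy _ _] _].
  by move=> /andP[/and3P[hz _ _] _]; apply: lexlt_trans.
- move=> x y; rewrite !mem_filter => /andP[/and3P[hx _ _] _] /andP[/and3P[hy _ _] _].
  exact: lexlt_total.
- by apply/eqP => h; have := ins _ hp0; rewrite h.
exists p; split; first by apply/properP; move: ps; rewrite mem_filter => /andP[].
move=> q /properP hq nqp; apply: pmin; first exact: ins.
exact/eqP.
Qed.

Definition m v : seq V := proj1_sig (constructive_indefinite_description _ (ex_min v)).

Lemma m_min v : is_min_path (fun a b => e a b) ord v0 v (m v).
Proof. by rewrite /m; case: constructive_indefinite_description. Qed.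

Lemma m_proper v : properb v (m v).
Proof. by apply/properP; case: (m_min v). Qed.

Lemma m_path v : path e v0 (m v).
Proof. by case/and3P: (m_proper v). Qed.

Lemma m_uniq v : uniq (v0 :: m v).
Proof. by case/and3P: (m_proper v). Qed.

Lemma m_last v : last v0 (m v) = v.
Proof. by case/and3P: (m_proper v) => _ _ /eqP. Qed.

Lemma m_le v t : properb v t -> t = m v \/ lexlt_from ord v0 (m v) t.
Proof.
move=> ht; case: (eqVneq t (m v)) => [->|ntm]; first by left.
by right; case: (m_min v) => _; apply; [apply/properP | apply/eqP].
Qed.

Lemma m_unique v p : is_min_path (fun a b => e a b) ord v0 v p -> p = m v.
Proof.
case=> /properP hp hmin; case: (m_le hp) => // h.
case: (eqVneq p (m v)) => // npm.
have nmp : m v <> p by move=> h0; rewrite h0 eqxx in npm.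
have h' := hmin (m v) (proj1 (m_min v)) nmp. case/and3P: hp => pp _ _.
by case: (lexlt_asym (m_path v) pp h h').
Qed.

Lemma proper_v0 p : properb v0 p -> p = [::].
Proof.
case: p => // a p /and3P[_ /= /andP[h _] /eqP hl].
by move: h; rewrite -hl mem_last.
Qed.

Lemma m_v0 : m v0 = [::].
Proof. exact: proper_v0 (m_proper v0). Qed.

Definition lt x y := lexlt_from ord v0 (m x) (m y).

Lemma lt_irr x : lt x x = false.
Proof. exact: lexlt_irr. Qed.

Lemma lt_trans x y z : lt x y -> lt y z -> lt x z.
Proof. exact: lexlt_trans (m_path _) (m_path _) (m_path _). Qed.

Lemma lt_asym x y : lt x y -> lt y x -> False.
Proof. exact: lexlt_asym (m_path _) (m_path _). Qed.

Lemma lt_total x y : x != y -> lt x y || lt y x.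
Proof.
move=> nxy; apply: lexlt_total (m_path _) (m_path _) _.
by apply: contra nxy => /eqP h; rewrite -(m_last x) h m_last.
Qed.

Lemma path_lt y w q : properb y q -> lexlt_from ord v0 q (m w) -> lt y w.
Proof.
move=> hq hl; rewrite /lt; case: (m_le hq) => [<-//|h].
apply: lexlt_trans h hl; [exact: m_path | by case/and3P: hq | exact: m_path].
Qed.

Lemma prefix_proper s1 y s2 z : properb z (s1 ++ y :: s2) -> properb y (rcons s1 y).
Proof.
case/and3P=> pp up _; rewrite /properb; apply/and3P; split.
- by move: pp; rewrite -cat_rcons cat_path => /andP[-> _].
- by move: up; rewrite -cat_rcons -cat_cons cat_uniq => /andP[-> _].
- by rewrite last_rcons.
Qed.

Lemma mem_proper p x z : properb x p -> z \in p ->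
  z = x \/ lexlt_from ord v0 (m z) p.
Proof.
move=> hp hz; move: hp; case/splitPr: hz => s1 s2 hp.
have hz := prefix_proper hp.
case: s2 hp => [|c r] hp.
  by left; case/and3P: hp => _ _ /eqP; rewrite last_cat.
right; rewrite -cat_rcons.
have hl : lexlt_from ord v0 (rcons s1 z) (rcons s1 z ++ c :: r) by apply: lexlt_prefix.
case: (m_le hz) => [<-//|h].
apply: lexlt_trans h hl; [exact: m_path | by case/and3P: hz | ].
by case/and3P: hp; rewrite cat_rcons.
Qed.

Lemma mem_m z x : z \in m x -> z = x \/ lt z x.
Proof. exact: mem_proper (m_proper x). Qed.


Lemma prefix_m w q : m w = rcons q w -> m (last v0 q) = q.
Proof.
move=> hw; set x := last v0 q.
have hpw := m_proper w; rewrite hw in hpw.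
case/and3P: hpw => pw uw _.
have wq : w \notin v0 :: q by move: uw; rewrite -rcons_cons rcons_uniq => /andP[].
have hq : properb x q.
  apply/and3P; split => //.
  - by move: pw; rewrite rcons_path => /andP[].
  - by move: uw; rewrite -rcons_cons rcons_uniq => /andP[].
have exw : e x w by move: pw; rewrite rcons_path => /andP[].
case: (m_le hq) => [//|hlt]; exfalso.
case: (lexlt_char hlt) => [[c [r hqr]] | [c [a [b [p' [q' [hmx hqq nab hab]]]]]]].
  case/and3P: hq => _ uq _; move: uq; rewrite hqr -cat_cons cat_uniq => /and3P[_ /hasPn hn _].
  have xin : x \in c :: r by rewrite /x hqr last_cat /=; apply: mem_last.
  have xm : x \in v0 :: m x by rewrite -[X in X \in _](m_last x) mem_last.
  by move: (hn x xin); rewrite xm.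
have hmw : m w = c ++ b :: rcons q' w by rewrite hw hqq rcons_cat rcons_cons.
case: (boolP (w \in m x)) => [wm|nwm].
  have wc : w \notin c by apply: contra wq => wc; rewrite inE hqq mem_cat wc orbT.
  have wap : w \in a :: p' by move: wm; rewrite hmx mem_cat (negbTE wc).
  have [s1 [s2 hs]] : exists s1 s2, a :: p' = s1 ++ w :: s2.
    by case/splitPr: wap => s1 s2; exists s1, s2.
  have hmx' : m x = (c ++ s1) ++ w :: s2 by rewrite hmx hs catA.
  have ht := prefix_proper (eq_ind _ (fun t => properb x t) (m_proper x) _ hmx').
  have [t' ht'] : exists t', rcons (c ++ s1) w = c ++ a :: t'.
    case: s1 hs {hmx' ht} => [|a1 s1'] /= [-> hs]; first by exists [::]; rewrite cats0 cats1.
    by exists (rcons s1' w); rewrite rcons_cat.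
  rewrite ht' in ht.
  have := @path_lt w w _ ht; rewrite hmw lexlt_div // => /(_ hab).
  by rewrite lt_irr.
have ht : properb w (rcons (m x) w).
  apply/and3P; split.
  - by rewrite rcons_path m_path m_last.
  - rewrite -rcons_cons rcons_uniq m_uniq andbT inE negb_or nwm andbT.
    by apply: contra wq => /eqP <-; rewrite mem_head.
  - by rewrite last_rcons.
have := @path_lt w w _ ht; rewrite hmx hmw rcons_cat rcons_cons lexlt_div // => /(_ hab).
by rewrite lt_irr.
Qed.


Lemma m_split u : u != v0 -> exists q, m u = rcons q u.
Proof.
move=> nu; have := m_last u; case/lastP: (m u) => [|q z] /=.
  by move=> h; rewrite h eqxx in nu.
by rewrite last_rcons => ->; exists q.
Qed.

Lemma Hrel x y : theta_edge e ord v0 x y <-> m y = rcons (m x) y.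
Proof.
split.
  case=> p [/m_unique -> [p1 [p2 hp]]].
  have uy := m_uniq y; rewrite hp in uy.
  have ly : last x (y :: p2) = y.
    by have := m_last y; rewrite -[last v0 (m y)]/(last v0 (v0 :: m y)) hp last_cat.
  have p20 : p2 = [::].
    case: p2 hp uy ly => [//|z p2] hp uy ly; exfalso.
    move: uy; rewrite cat_uniq => /and3P[_ _ /= /andP[_ /andP[nyp _]]].
    by move: nyp; rewrite -ly /= mem_last.
  subst p2.
  have ny : y != v0.
    apply/eqP => yv; subst y; move/(congr1 size): hp; rewrite m_v0 size_cat /= !addnS.
    by [].
  have [q hq] := m_split ny.
  move: hp; rewrite hq -rcons_cons -(cat1s x) -(cat1s y) catA cats1 cats1 => /rcons_inj [hq'].
  have hx : x = last v0 q by rewrite -[last v0 q]/(last v0 (v0 :: q)) hq' last_rcons.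
  by rewrite hx (prefix_m hq).
move=> h; exists (m y); split; first exact: m_min.
exists (belast v0 (m x)), [::].
by rewrite h -rcons_cons lastI m_last -!cats1 -catA.
Qed.


Definition Hr := theta_edge e ord v0.

Lemma ppath_rcons (R : V -> V -> Prop) x p y :
  ppath R x (rcons p y) <-> ppath R x p /\ R (last x p) y.
Proof.
elim: p x => [|a p IH] x /=; first by split; [case | case].
rewrite IH; split; [by case=> ? [] | by case=> [[]]].
Qed.

Lemma Fedge_v0 u : F_edge Hr v0 u <-> u <> v0.
Proof.
split.
  have gen : forall a b, clos_trans V Hr a b -> b <> v0.
    move=> a b h; elim: h => [a' b' /Hrel hab bv | a' b' c' _ _ _ IH //].
    by move: hab; rewrite bv m_v0; case: (m a').
  exact: gen.
move=> /eqP nu.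
have [n hn] : exists n, size (m u) <= n by exists (size (m u)).
elim: n u hn nu => [|n IH] u hn nu.
  by have [q hq] := m_split nu; move: hn; rewrite hq size_rcons.
have [q hq] := m_split nu.
have hx := prefix_m hq.
have hH : Hr (last v0 q) u by apply/Hrel; rewrite hx.
case: (eqVneq (last v0 q) v0) => [hv|nv].
  by apply: t_step; rewrite -hv.
apply: t_trans (IH _ _ nv) (t_step _ _ _ _ hH).
by rewrite hx; move: hn; rewrite hq size_rcons.
Qed.

Lemma m_Hpath u : ppath Hr v0 (m u).
Proof.
have [n hn] : exists n, size (m u) <= n by exists (size (m u)).
elim: n u hn => [|n IH] u hn.
  by move: hn; rewrite leqn0 => /nilP ->.
case: (eqVneq u v0) => [->|nu]; first by rewrite m_v0.
have [q hq] := m_split nu.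
have hx := prefix_m hq.
rewrite hq; apply/ppath_rcons; split.
  by rewrite -hx; apply: IH; rewrite hx; move: hn; rewrite hq size_rcons.
by apply/Hrel; rewrite hx.
Qed.

Lemma Hpath_unique q : ppath Hr v0 q -> q = m (last v0 q).
Proof.
elim/last_ind: q => [|q y IH]; first by rewrite m_v0.
case/ppath_rcons => /IH hq /Hrel hy.
by rewrite last_rcons hy -hq.
Qed.

Lemma Hmin u p : is_min_path Hr ord v0 u p <-> p = m u.
Proof.
split.
  by case=> [[/Hpath_unique hp [_ <-]] _].
move=> ->; split.
  by split; [exact: m_Hpath | split; [exact: m_uniq | exact: m_last]].
by move=> q [/Hpath_unique hq [_ hl]]; rewrite hq hl.
Qed.

Lemma Ford u v : F_ord Hr ord v0 u v <-> lt u v.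
Proof.
split.
  by case=> pa [pb [/Hmin -> [/Hmin -> h]]].
by move=> h; exists (m u), (m v); rewrite !Hmin.
Qed.


Definition stk (fr : seq (V * seq V)) : seq V := flatten (map snd fr).

Definition Rf (f g : V * seq V) : Prop :=
  exists c r, m f.1 = m g.1 ++ c :: r /\ forall b, b \in g.2 -> ord g.1 c b.

Fixpoint ppw (fr : seq (V * seq V)) : Prop :=
  if fr is f :: fr' then (forall g, g \in fr' -> Rf f g) /\ ppw fr' else True.

Definition Inv (L : seq V) (fr : seq (V * seq V)) : Prop :=
  [/\ (exists L', L = v0 :: L') /\ sorted lt L,
      (forall x y, x \in L -> y \notin L -> lt x y),
      (forall f, f \in fr -> [/\ f.1 \in L, (forall b, b \in f.2 -> e f.1 b) &
                                   pairwise (ord f.1) f.2]),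
      (forall x y, x \in L -> e x y -> y \notin L ->
                   exists2 f, f \in fr & f.1 = x /\ y \in f.2)
    & ppw fr].

Lemma stk_mem (fr : seq (V * seq V)) f y : f \in fr -> y \in f.2 -> y \in stk fr.
Proof.
elim: fr => [|g fr IH] //; rewrite inE => /orP[/eqP <-|hf] hy /=; rewrite mem_cat.
  by rewrite hy.
by rewrite IH ?orbT.
Qed.

Lemma decomp fr v S : stk fr = v :: S ->
  exists fa x B fb, fr = fa ++ (x, v :: B) :: fb /\ stk fa = [::].
Proof.
elim: fr S => [|[x B0] fr IH] S //=.
case: B0 => [|b B] /=.
  move=> /IH [fa [x' [B [fb [-> h]]]]].
  by exists ((x, [::]) :: fa), x', B, fb.
by case=> <- _; exists [::], x, B, fr.
Qed.

Lemma stk_decomp fa x v B fb : stk fa = [::] ->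
  stk (fa ++ (x, v :: B) :: fb) = v :: stk ((x, B) :: fb).
Proof. by rewrite /stk map_cat flatten_cat => ->. Qed.

Lemma ppw_suffix fa f fb : ppw (fa ++ f :: fb) -> ppw (f :: fb).
Proof. by elim: fa => [|g fa IH] //= [_ /IH]. Qed.

Lemma ppw_before fa f fb g : ppw (fa ++ f :: fb) -> g \in fa -> Rf g f.
Proof.
elim: fa => [|h fa IH] //= [H1 H2]; rewrite inE => /orP[/eqP ->|hg].
  by apply: H1; rewrite mem_cat mem_head orbT.
exact: IH.
Qed.

Lemma v0_in L fr : Inv L fr -> v0 \in L.
Proof. by case=> [[[L' ->] _]] *; rewrite mem_head. Qed.

Lemma m_sub L fr x z : Inv L fr -> x \in L -> z \in m x -> z \in L.
Proof.
move=> [_ H3 _ _ _] xL /mem_m [->//|hzx].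
apply/negPn/negP => zL; exact: lt_asym hzx (H3 _ _ xL zL).
Qed.

Lemma ext_proper L fr x y : Inv L fr -> x \in L -> e x y -> y \notin L ->
  properb y (rcons (m x) y).
Proof.
move=> hI xL exy yL; apply/and3P; split.
- by rewrite rcons_path m_path m_last.
- rewrite -rcons_cons rcons_uniq m_uniq andbT inE negb_or.
  apply/andP; split.
    by apply: contra yL => /eqP ->; exact: v0_in hI.
  by apply: contra yL => /(m_sub hI xL).
- by rewrite last_rcons.
Qed.

Lemma ex_wmin (L : seq V) y : y \notin L ->
  exists2 w, w \notin L & forall z, z \notin L -> z != w -> lt w z.
Proof.
move=> yL.
have [||| w ws wmin] := @list_min _ lt [seq z <- enum V | z \notin L].
- by move=> a b c _ _ _; apply: lt_trans.
- by move=> a b _ _; apply: lt_total.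
- apply/eqP => h.
  have : y \in [seq z <- enum V | z \notin L] by rewrite mem_filter yL mem_enum.
  by rewrite h.
exists w; first by move: ws; rewrite mem_filter => /andP[].
by move=> z zL nzw; apply: wmin => //; rewrite mem_filter zL mem_enum.
Qed.

Lemma core (L : seq V) w x y q c r : (forall z, z \notin L -> z != w -> lt w z) ->
  m w = rcons (m x) w -> properb y q -> y \notin L -> q = m x ++ c :: r ->
  ord x c w -> False.
Proof.
move=> wmin hw hq yL hqe hc.
have exw : e x w by move: (m_path w); rewrite hw rcons_path m_last => /andP[].
have ncw : c != w by apply: contraTneq hc => ->; rewrite ord_irr.
have hl : lexlt_from ord v0 q (m w) by rewrite hqe hw -cats1 lexlt_div // m_last.
have := path_lt hq hl.
case: (eqVneq y w) => [->|nyw]; first by rewrite lt_irr.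
by move=> h; exact: lt_asym h (wmin _ yL nyw).
Qed.


Lemma nextP L fr fa x v B fb : Inv L fr -> fr = fa ++ (x, v :: B) :: fb ->
  stk fa = [::] -> v \notin L ->
  (forall y, y \notin L -> y != v -> lt v y) /\ m v = rcons (m x) v.
Proof.
move=> hI hfr hfa vL.
have [w wL wmin] := ex_wmin vL.
have hv0 := v0_in hI.
have nw0 : w != v0 by apply: contraNneq wL => ->.
have [q hq] := m_split nw0.
set xw := last v0 q.
have hxw : m xw = q := prefix_m hq.
have hw : m w = rcons (m xw) w by rewrite hxw.
have exw : e xw w by move: (m_path w); rewrite hq rcons_path => /andP[].
have xwL : xw \in L.
  apply/negPn/negP => xwL.
  have nxw : xw != w.
    apply/eqP => h; move: hq; rewrite -h hxw => /(congr1 size).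
    by rewrite size_rcons; apply: n_Sn.
  have h1 := wmin _ xwL nxw.
  have h2 : lt xw w by rewrite /lt hxw hq -cats1 lexlt_prefix.
  exact: lt_asym h1 h2.
have [_ H3 H4 H5 H6] := hI.
have [f fin [f1 wf]] := H5 _ _ xwL exw wL.
have xvin : (x, v :: B) \in fr by rewrite hfr mem_cat mem_head orbT.
have [xL exv pwx] := H4 _ xvin; rewrite /= in xL exv pwx.
have hpv : properb v (rcons (m x) v).
  by apply: (@ext_proper L fr) => //; apply: exv; rewrite mem_head.
move: fin; rewrite hfr mem_cat => /orP[ffa|].
  by have := stk_mem ffa wf; rewrite hfa.
rewrite inE => /orP[/eqP fe|ffb].
  subst f; rewrite /= in f1 wf; rewrite -f1 in hw.
  move: wf; rewrite inE => /orP[/eqP wv|wB].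
    subst w; split => // y yL nyv; exact: wmin.
  exfalso; move: pwx; move=> /andP[/allP /(_ _ wB) hvw _].
  by apply: (core wmin hw hpv vL (c := v) (r := [::])) => //; rewrite cats1.
exfalso.
move: H6; rewrite hfr => /ppw_suffix [/(_ _ ffb) [c [r [hmx hc]]] _].
rewrite f1 in hmx hc.
by apply: (core wmin hw hpv vL (c := c) (r := rcons r v)) => //;
  [rewrite hmx rcons_cat | apply: hc].
Qed.


Lemma parentL L fr w : Inv L fr -> w \notin L ->
  (forall z, z \notin L -> z != w -> lt w z) ->
  exists xw, [/\ xw \in L, e xw w & m w = rcons (m xw) w].
Proof.
move=> hI wL wmin.
have hv0 := v0_in hI.
have nw0 : w != v0 by apply: contraNneq wL => ->.
have [q hq] := m_split nw0.
set xw := last v0 q.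
have hxw : m xw = q := prefix_m hq.
have exw : e xw w by move: (m_path w); rewrite hq rcons_path => /andP[].
exists xw; split => //; last by rewrite hxw.
apply/negPn/negP => xwL.
have nxw : xw != w.
  apply/eqP => h; move: hq; rewrite -h hxw => /(congr1 size).
  by rewrite size_rcons; apply: n_Sn.
have h1 := wmin _ xwL nxw.
have h2 : lt xw w by rewrite /lt hxw hq -cats1 lexlt_prefix.
exact: lt_asym h1 h2.
Qed.

Lemma terminal L fr : Inv L fr -> stk fr = [::] -> forall y, y \in L.
Proof.
move=> hI hs y; apply/negPn/negP => yL.
have [w wL wmin] := ex_wmin yL.
have [xw [xwL exw hw]] := parentL hI wL wmin.
have [_ _ _ H5 _] := hI.
have [f fin [_ wf]] := H5 _ _ xwL exw wL.
by have := stk_mem fin wf; rewrite hs.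
Qed.

Lemma weak_pw (T : eqType) (r : rel T) s :
  pairwise (fun a b => (a == b) || r a b) s -> uniq s -> pairwise r s.
Proof.
elim: s => //= a s IH /andP[ha hs] /andP[nas us]; rewrite IH // andbT.
apply/allP => b bs; move/allP: ha => /(_ b bs) /orP[/eqP ab|//].
by rewrite ab bs in nas.
Qed.

Lemma push_pairwise L v : pairwise (ord v) (push_nbrs e ord L v).
Proof.
rewrite /push_nbrs; set s := [seq w <- enum V | e v w & w \notin L].
set le := fun a b => (a == b) || ord v a b.
have alls : all [pred w | e v w] s by apply/allP => w; rewrite mem_filter => /andP[/andP[]].
have hs : sorted le (sort le s).
  apply: (sort_sorted_in (P := [pred w | e v w])) => // a b ha hb.
  rewrite /le; case: (eqVneq a b) => [->|nab] //=.
  exact: ord_total.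
apply: weak_pw; last by rewrite sort_uniq filter_uniq ?enum_uniq.
rewrite -(sorted_pairwise_in (P := [pred w | e v w])) //.
  move=> b a c ha hb hc; rewrite /le.
  case: (eqVneq a b) => [->//|nab] /=; case: (eqVneq b c) => [<-|nbc] /=.
    by move=> ->; rewrite orbT.
  case: (eqVneq a c) => [eac|nac] /=.
    by subst c => h1 h2; have := ord_trans hb ha hb h1 h2; rewrite ord_irr.
  exact: ord_trans.
by apply/allP => w; rewrite mem_sort => /(allP alls).
Qed.


Lemma skip_step L fr fa x v B fb : Inv L fr -> fr = fa ++ (x, v :: B) :: fb ->
  stk fa = [::] -> v \in L -> Inv L ((x, B) :: fb).
Proof.
move=> hI hfr hfa vL; have [H1 H3 H4 H5 H6] := hI.
have xvin : (x, v :: B) \in fr by rewrite hfr mem_cat mem_head orbT.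
have [xL exv pwx] := H4 _ xvin; rewrite /= in xL exv pwx.
split => //.
- move=> f; rewrite inE => /orP[/eqP ->|ffb] /=.
    split => //; first by move=> b bB; apply: exv; rewrite inE bB orbT.
    by move: pwx => /andP[].
  by apply: H4; rewrite hfr mem_cat inE ffb !orbT.
- move=> x' y x'L exy yL.
  have [f fin [f1 yf]] := H5 _ _ x'L exy yL.
  move: fin; rewrite hfr mem_cat => /orP[ffa|].
    by have := stk_mem ffa yf; rewrite hfa.
  rewrite inE => /orP[/eqP fe|ffb].
    subst f; exists (x, B); first exact: mem_head.
    split => //; move: yf; rewrite /= inE => /orP[/eqP yv|//].
    by rewrite yv vL in yL.
  by exists f => //; rewrite inE ffb orbT.
- by move: H6; rewrite hfr => /ppw_suffix.
Qed.

Lemma visit_step L fr fa x v B fb : Inv L fr -> fr = fa ++ (x, v :: B) :: fb ->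
  stk fa = [::] -> v \notin L ->
  Inv (rcons L v) ((v, push_nbrs e ord (rcons L v) v) :: (x, B) :: fb).
Proof.
move=> hI hfr hfa vL; have [[[L' HL] Hs] H3 H4 H5 H6] := hI.
have [vmin hmv] := nextP hI hfr hfa vL.
have xvin : (x, v :: B) \in fr by rewrite hfr mem_cat mem_head orbT.
have [xL exv pwx] := H4 _ xvin; rewrite /= in xL exv pwx.
have sub : forall z, z \in L -> z \in rcons L v by move=> z zL; rewrite mem_rcons inE zL orbT.
split.
- split; first by exists (rcons L' v); rewrite HL.
  move: Hs; rewrite HL /= rcons_path => ->; apply: H3; last exact: vL.
  by rewrite HL; apply: mem_last.
- move=> x' y; rewrite mem_rcons inE => /orP[/eqP ->|x'L]; rewrite mem_rcons inE negb_or => /andP[nyv yL].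
    exact: vmin.
  exact: H3.
- move=> f; rewrite !inE => /orP[/eqP ->|/orP[/eqP ->|ffb]] /=.
  + split; first by rewrite mem_rcons mem_head.
      by move=> b; rewrite mem_sort mem_filter => /andP[/andP[]].
    exact: push_pairwise.
  + split; first exact: sub.
      by move=> b bB; apply: exv; rewrite inE bB orbT.
    by move: pwx => /andP[].
  + have ffr : f \in fr by rewrite hfr mem_cat inE ffb !orbT.
    have [f1 f2 f3] := H4 f ffr.
    by split => //; apply: sub.
- move=> x' y; rewrite mem_rcons inE => /orP[/eqP ->|x'L] exy.
    move=> yL; exists (v, push_nbrs e ord (rcons L v) v); first exact: mem_head.
    by split => //=; rewrite mem_sort mem_filter exy yL mem_enum.
  rewrite mem_rcons inE negb_or => /andP[nyv yL].
  have [f fin [f1 yf]] := H5 _ _ x'L exy yL.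
  move: fin; rewrite hfr mem_cat => /orP[ffa|].
    by have := stk_mem ffa yf; rewrite hfa.
  rewrite inE => /orP[/eqP fe|ffb].
    subst f; exists (x, B); first by rewrite inE mem_head orbT.
    split => //; move: yf; rewrite /= inE => /orP[/eqP yv|//].
    by rewrite yv eqxx in nyv.
  by exists f => //; rewrite !inE ffb !orbT.
- move: H6; rewrite hfr => /ppw_suffix [Hx Hfb] /=.
  split; last by split.
  move=> g; rewrite inE => /orP[/eqP ->|gfb].
    exists v, [::]; split; first by rewrite hmv cats1.
    by move=> b bB; move: pwx => /andP[/allP /(_ b bB)].
  have [c [r [hmx hc]]] := Hx g gfb.
  by exists c, (rcons r v); split => //; rewrite hmv hmx rcons_cat.
Qed.


Definition Final (R : seq V) :=
  (exists L', R = v0 :: L') /\ sorted lt R /\ forall y, y \in R.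

Lemma Final_of L fr : Inv L fr -> stk fr = [::] -> Final L.
Proof.
move=> hI hs; have [[H1 H2] _ _ _ _] := hI.
by split => //; split => //; exact: terminal hI hs.
Qed.

Lemma run n L fr : Inv L fr -> size (stk fr) + #|V| * (#|V| - size L) <= n ->
  Final (lex_dfs_fuel e ord n L (stk fr)).
Proof.
elim: n L fr => [|n IH] L fr hI hn.
  case E: (stk fr) => [|v S] /=; first exact: Final_of hI E.
  by move: hn; rewrite E.
case E: (stk fr) => [|v S] /=; first exact: Final_of hI E.
have [fa [x [B [fb [hfr hfa]]]]] := decomp E.
have hS : S = stk ((x, B) :: fb).
  by move: E; rewrite hfr stk_decomp // => -[].
case: ifP => vL.
  rewrite hS; apply: IH; first exact: skip_step hI hfr hfa vL.
  by move: hn; rewrite E /= -hS.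
have vL' : v \notin L by rewrite vL.
have hI' := visit_step hI hfr hfa vL'.
set P := push_nbrs e ord (rcons L v) v in hI' *.
have -> : P ++ S = stk ((v, P) :: (x, B) :: fb) by rewrite hS.
apply: IH; first exact: hI'.
have hu : uniq (P ++ rcons L v).
  rewrite cat_uniq; apply/and3P; split.
  - by rewrite /P /push_nbrs sort_uniq filter_uniq ?enum_uniq.
  - apply/hasPn => z zL; rewrite /P /push_nbrs mem_sort mem_filter zL.
    by rewrite andbF.
  - by have [[_ Hs] _ _ _ _] := hI'; apply: sorted_uniq Hs; [move=> ? ? ?; exact: lt_trans | exact: lt_irr].
have hsz : size P + size (rcons L v) <= #|V|.
  by rewrite -size_cat -(card_uniqP hu); apply: max_card.
move: hn hsz; rewrite E /= size_rcons.
have -> : stk ((v, P) :: (x, B) :: fb) = P ++ S by rewrite hS.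
rewrite size_cat.
set N := #|V|; set a := size L; set k := size P; set s := size S.
move=> hn hsz.
have ha : a < N by lia.
have e1 : N - a = (N - a.+1).+1 by lia.
rewrite e1 mulnS in hn.
move: hn; set t := N * (N - a.+1); clearbody t => hn.
lia.
Qed.


Lemma lex_dfs_final : Final (lex_dfs e ord v0).
Proof.
rewrite /lex_dfs.
have -> : #|V|.+1 ^ 2 = (#|V|.+1 ^ 2).-1.+1 by rewrite prednK // expn_gt0.
rewrite /=.
set P0 := push_nbrs e ord [:: v0] v0.
have -> : P0 ++ [::] = stk [:: (v0, P0)] by [].
apply: run.
  split.
  - by split; [exists [::] | ].
  - move=> x y; rewrite inE => /eqP ->; rewrite inE => ny.
    rewrite /lt m_v0; have [q hq] := m_split ny; rewrite hq.
    have : rcons q y != [::] by rewrite -size_eq0 size_rcons.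
    by case: (rcons q y).
  - move=> f; rewrite inE => /eqP -> /=; split.
    + exact: mem_head.
    + by move=> b; rewrite mem_sort mem_filter => /andP[/andP[]].
    + exact: push_pairwise.
  - move=> x y; rewrite inE => /eqP -> exy yL.
    exists (v0, P0); first exact: mem_head.
    by split => //=; rewrite mem_sort mem_filter exy yL mem_enum.
  - by split.
have hk : size P0 <= #|V|.
  rewrite /P0 /push_nbrs size_sort size_filter cardT; exact: count_size.
rewrite /stk /= cats0.
have hNN : #|V| * (#|V| - 1) <= #|V| * #|V| by apply: leq_mul => //; apply: leq_subr.
rewrite expn1 mulnS.
move: hNN; set t := #|V| * #|V|; set t' := #|V| * (#|V| - 1); clearbody t t'.
move: hk; set N := #|V|; set k := size P0; clearbody N k.
lia.
Qed.

End Main.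

Unset Implicit Arguments.

Theorem lemma9p1 (V : finType) (e : rel V) (ord : V -> rel V) (v0 : V) :
  edge_ordered e ord ->
  (forall v, connect e v0 v) ->
  let H := theta_edge e ord v0 in
  let L := lex_dfs e ord v0 in
  (forall u, F_edge H v0 u <-> u <> v0) /\
  (exists L', L = v0 :: L') /\ uniq L /\ (forall v, v \in L) /\
  (forall u v, F_edge H v0 u -> F_edge H v0 v ->
     (F_ord H ord v0 u v <-> index u L < index v L)).
Proof.
move=> Hord Hconn H L.
have [[L' HL] [Hs Hall]] := lex_dfs_final Hord Hconn.
have Htr : ssrbool.transitive (lt Hord Hconn) by move=> y x z; apply: lt_trans.
split; first exact: Fedge_v0 Hord Hconn.
split; first by exists L'.
have Hu : uniq L.
  by apply: sorted_uniq Hs => //; move=> z; exact: lt_irr.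
split => //; split => // u v _ _.
rewrite (Ford Hord Hconn); split.
  move=> hlt; rewrite ltnNge leq_eqVlt; apply/negP => /orP[/eqP heq|hlt'].
    have uv := index_inj v0 (Hall u) (Hall v) (esym heq).
    by rewrite uv lt_irr in hlt.
  have := sorted_ltn_index Htr Hs v u (Hall v) (Hall u) hlt'.
  by move=> h; exact: (lt_asym h hlt).
move=> hi; exact: (sorted_ltn_index Htr Hs u v (Hall u) (Hall v) hi).
Qed.
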